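(* Let $a,b\in GF(q)\setminus\{0\}$, $a\ne b$, with $b/a$ a square in $GF(q)$, and let $\mathcal B^1_{(s_1,c_1)},\mathcal B^1_{(s_2,c_2)}\in\tau(a,b)$. Then these two circles are tangential to $\mathcal B_a$ in the same point $P$ or in the opposite points $P$ and $-P$, respectively, if and only if $s_1\bar s_2\in GF(q)\setminus\{0\}$. In that case $P$ satisfies $$\frac{P^2}{a}=\frac{s_1}{\bar s_1}=\frac{s_2}{\bar s_2}.$$
   Context: Let $p$ be an odd prime, $m\ge1$, and $q=p^m$. $GF(q^2)$ denotes the quadratic extension of $GF(q)$, and for $z\in GF(q^2)$ we write $\bar z:=z^{q}$. The Miquelian Möbius plane $\mathbb M(q)$ has point set $GF(q^2)\cup\{\infty\}$ and circles of two types: for $s\in GF(q^2)$ and $c\in GF(q)\setminus\{0\}$, the circle of the first type $\mathcal B^1_{(s,c)}=\{z\in GF(q^2):(z-s)(\bar z-\bar s)=c\}$; for $s\in GF(q^2)\setminus\{0\}$ and $c\in GF(q)$, the circle of the second type $\mathcal B^2_{(s,c)}=\{z\in GF(q^2):\bar s z+s\bar z=c\}\cup\{\infty\}$. Two circles are called tangential if they have exactly one point in common. For $a\in GF(q)\setminus\{0\}$ put $\mathcal B_a:=\mathcal B^1_{(0,a)}$, and for $a,b\in GF(q)\setminus\{0\}$ let $\tau(a,b)$ be the set of circles tangential to both $\mathcal B_a$ and $\mathcal B_b$. Note that $P\in\mathcal B_a$ implies $-P\in\mathcal B_a$; $-P$ is called the opposite point of $P$. *)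

(* Defs.v *)
From HB Require Import structures.
From mathcomp Require Import all_boot all_order all_algebra all_field.
Set Implicit Arguments. Unset Strict Implicit. Unset Printing Implicit Defensive.
Import GRing.Theory.
Local Open Scope ring_scope.

Section Moebius.
Variable L : finFieldType.   (* plays the role of GF(q^2) *)
Variable q : nat.            (* q = p^m *)

Definition conjq (z : L) : L := z ^+ q.

(* GF(q) as the subfield of fixed points of z |-> z^q *)
Definition inGFq (z : L) : bool := conjq z == z.

(* points of M(q): GF(q^2) ∪ {∞}, with None = ∞ *)
Definition point := option L.

Definition circle1 (s c : L) : {set point} :=
  [set x : point | if x is Some z then (z - s) * (conjq z - conjq s) == c else false].

Definition circle2 (s c : L) : {set point} :=
  [set x : point | if x is Some z then conjq s * z + s * conjq z == c else true].

Definition is_circle (C : {set point}) : Prop :=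
  exists s c : L,
    (inGFq c /\ c != 0 /\ C = circle1 s c) \/
    (s != 0 /\ inGFq c /\ C = circle2 s c).

Definition tangential (C D : {set point}) : Prop := #|C :&: D| = 1%N.

Definition Bc (a : L) : {set point} := circle1 0 a.

Definition tau (a b : L) (C : {set point}) : Prop :=
  is_circle C /\ tangential C (Bc a) /\ tangential C (Bc b).

End Moebius.

(* Main.v *)
Require Import Defs.
From HB Require Import structures.
From mathcomp Require Import all_boot all_order all_algebra all_field.
From mathcomp Require Import ring.
Import GRing.Theory.
Local Open Scope ring_scope.

Section Aux.
Variable L : finFieldType.
Variable q : nat.
Hypothesis hinv : forall x : L, conjq q (conjq q x) = x.
Hypothesis hq0 : (0 < q)%N.
Hypothesis hqodd : odd q.
Hypothesis h2 : (2%:R : L) != 0.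

Lemma conjM (x y : L) : conjq q (x * y) = conjq q x * conjq q y.
Proof. by rewrite /conjq exprMn. Qed.
Lemma conjV (x : L) : conjq q (x^-1) = (conjq q x)^-1.
Proof. by rewrite /conjq exprVn. Qed.
Lemma conj0 : conjq q (0 : L) = 0.
Proof. by rewrite /conjq expr0n; case: q hq0. Qed.
Lemma conjN (x : L) : conjq q (- x) = - conjq q x.
Proof. by rewrite /conjq exprNn -signr_odd hqodd expr1 mulN1r. Qed.
Lemma conj_eq0 (x : L) : (conjq q x == 0) = (x == 0).
Proof. by rewrite /conjq expf_eq0 hq0. Qed.

Lemma tangent_fix (s c a P : L) : a != 0 ->
  circle1 q s c :&: Bc q a = [set Some P] ->
  [/\ s != 0, conjq q s * P = s * conjq q P & P * conjq q P = a].
Proof.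
move=> a0 H.
have HP : Some P \in circle1 q s c :&: Bc q a by rewrite H set11.
move: (HP); rewrite !inE conj0 !subr0 => /andP[/eqP HC /eqP HB].
have P0 : P != 0 by apply: contraNneq a0 => P0; rewrite -HB P0 mul0r.
have s0 : s != 0.
  apply/negP => /eqP s0.
  have : Some (- P) \in circle1 q s c :&: Bc q a.
    rewrite !inE s0 conj0 !subr0 conjN mulrNN -HC s0 conj0 !subr0 HB !eqxx //.
  rewrite H inE => /eqP [] /eqP; rewrite eq_sym -addr_eq0 -mulr2n -mulr_natr mulf_eq0.
  by rewrite (negPf P0) (negPf h2).
have cs0 : conjq q s != 0 by rewrite conj_eq0.
split=> //.
set P' := s * conjq q P / conjq q s.
have cP' : conjq q P' = conjq q s * P / s.
  by rewrite /P' conjM conjV !conjM !hinv.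
have : Some P' \in circle1 q s c :&: Bc q a.
  rewrite !inE conj0 subr0 cP'; apply/andP; split; apply/eqP.
    rewrite -HC /P'.
    have -> : s * conjq q P / conjq q s - s = s / conjq q s * (conjq q P - conjq q s).
      by field.
    have -> : conjq q s * P / s - conjq q s = conjq q s / s * (P - s) by field.
    by field; rewrite s0 cs0.
  by rewrite -HB /P'; field; rewrite s0 cs0.
rewrite H inE => /eqP [] HP'.
by rewrite -{1}HP' /P'; field; by rewrite cs0.
Qed.

Lemma tang_ex (s c a : L) : tangential (circle1 q s c) (Bc q a) ->
  exists P, circle1 q s c :&: Bc q a = [set Some P].
Proof.
rewrite /tangential => /eqP /cards1P [[P|] H]; first by exists P.
have : (None : point L) \in circle1 q s c :&: Bc q a by rewrite H set11.
by rewrite !inE.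
Qed.

Lemma alg1 (s1 s2 t1 t2 P Pb : L) : Pb != 0 -> t1 * P = s1 * Pb ->
  t2 * P = s2 * Pb -> t1 * s2 = s1 * t2.
Proof.
move=> Pb0 e1 e2; apply: (mulIf Pb0).
by rewrite -mulrA -e2 mulrCA e1 mulrCA mulrA.
Qed.

Lemma alg2 (s1 s2 t1 t2 P1 P2 Pb1 Pb2 a : L) : a != 0 -> t1 != 0 -> t2 != 0 ->
  t1 * P1 = s1 * Pb1 -> t2 * P2 = s2 * Pb2 -> P1 * Pb1 = a -> P2 * Pb2 = a ->
  t1 * s2 = s1 * t2 -> P2 ^+ 2 = P1 ^+ 2.
Proof.
move=> a0 t10 t20 e1 e2 n1 n2 e.
have P10 : P1 != 0 by apply: contraNneq a0 => h; rewrite -n1 h mul0r.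
have P20 : P2 != 0 by apply: contraNneq a0 => h; rewrite -n2 h mul0r.
have Pb1E : Pb1 = a / P1 by rewrite -n1; field.
have Pb2E : Pb2 = a / P2 by rewrite -n2; field.
have s1E : s1 = t1 * P1 ^+ 2 / a.
  have Pb10 : Pb1 != 0 by rewrite Pb1E mulf_neq0 ?invr_eq0.
  by rewrite -[s1](mulfK Pb10) -e1 Pb1E; field; rewrite a0 P10.
have s2E : s2 = t2 * P2 ^+ 2 / a.
  have Pb20 : Pb2 != 0 by rewrite Pb2E mulf_neq0 ?invr_eq0.
  by rewrite -[s2](mulfK Pb20) -e2 Pb2E; field; rewrite a0 P20.
move: e; rewrite s1E s2E => e.
have : (t1 * t2 / a) * P2 ^+ 2 = (t1 * t2 / a) * P1 ^+ 2.
  by transitivity (t1 * (t2 * P2 ^+ 2 / a)); [ring | rewrite e; ring].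
have nz : t1 * t2 / a != 0 by rewrite !mulf_neq0 // invr_eq0.
by move=> h; apply: (mulfI nz h).
Qed.

End Aux.

Theorem mainTheorem3 (p m : nat) (L : finFieldType)
  (hp : prime p) (hodd : odd p) (hm : (0 < m)%N)
  (hcard : #|L| = ((p ^ m) ^ 2)%N)
  (a b s1 c1 s2 c2 : L)
  (ha : inGFq (p ^ m) a) (ha0 : a != 0)
  (hb : inGFq (p ^ m) b) (hb0 : b != 0) (hab : a != b)
  (hsq : exists x : L, inGFq (p ^ m) x /\ b / a = x ^+ 2)
  (hc1 : inGFq (p ^ m) c1) (hc10 : c1 != 0)
  (hc2 : inGFq (p ^ m) c2) (hc20 : c2 != 0)
  (ht1 : tau (p ^ m) a b (circle1 (p ^ m) s1 c1))
  (ht2 : tau (p ^ m) a b (circle1 (p ^ m) s2 c2)) :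
  ((exists P : L,
      circle1 (p ^ m) s1 c1 :&: Bc (p ^ m) a = [set Some P] /\
      (circle1 (p ^ m) s2 c2 :&: Bc (p ^ m) a = [set Some P] \/
       circle1 (p ^ m) s2 c2 :&: Bc (p ^ m) a = [set Some (- P)]))
   <-> (inGFq (p ^ m) (s1 * conjq (p ^ m) s2) /\ s1 * conjq (p ^ m) s2 != 0))
  /\
  ((inGFq (p ^ m) (s1 * conjq (p ^ m) s2) /\ s1 * conjq (p ^ m) s2 != 0) ->
   forall P : L, circle1 (p ^ m) s1 c1 :&: Bc (p ^ m) a = [set Some P] ->
     P ^+ 2 / a = s1 / conjq (p ^ m) s1 /\ s1 / conjq (p ^ m) s1 = s2 / conjq (p ^ m) s2).
Proof.
set q := (p ^ m)%N.
have hinv : forall x : L, conjq q (conjq q x) = x.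
  move=> x; rewrite /conjq -exprM mulnn -hcard; exact: expf_card.
have hq0 : (0 < q)%N by rewrite expn_gt0 prime_gt0.
have hqodd : odd q by rewrite oddX hodd orbT.
have h2 : (2%:R : L) != 0.
  have pc : p \in [pchar L] by apply: (card_finPcharP (n := (m * 2)%N)) => //; rewrite expnM.
  apply/negP => /eqP h.
  have : (2%N \in [pchar L]) by rewrite inE h eqxx.
  rewrite (pcharf_eq pc) inE => /eqP h'; by rewrite -h' in hodd.
have cN := @conjN L q hqodd.
have cM := @conjM L q.
have cz := @conj_eq0 L q hq0.
have TF := @tangent_fix L q hinv hq0 hqodd h2.
case: ht1 => _ [/tang_ex [P1 E1] _].
case: ht2 => _ [/tang_ex [P2 E2] _].
have [s10 e1 n1] := TF _ _ _ _ ha0 E1.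
have [s20 e2 n2] := TF _ _ _ _ ha0 E2.
have t10 : conjq q s1 != 0 by rewrite cz.
have t20 : conjq q s2 != 0 by rewrite cz.
have GF : inGFq q (s1 * conjq q s2) /\ s1 * conjq q s2 != 0 <->
          conjq q s1 * s2 = s1 * conjq q s2.
  rewrite /inGFq cM hinv mulf_neq0 ?cz //; split; first by case=> /eqP.
  by move=> ->; split.
split; last first.
  move=> /GF e P E.
  have [_ e' n'] := TF _ _ _ _ ha0 E.
  have P0 : P != 0 by apply: contraNneq ha0 => h; rewrite -n' h mul0r.
  have Pb0 : conjq q P != 0 by rewrite cz.
  split.
    rewrite -n' -{1}(mulfK Pb0 s1) -e'; field.
    by rewrite P0 Pb0 t10.
  rewrite -{1}(mulfK t20 s1) -e; field.
  by rewrite t10 t20.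
rewrite GF; split.
  move=> [P [E E']].
  have [_ e' n'] := TF _ _ _ _ ha0 E.
  have P0 : P != 0 by apply: contraNneq ha0 => h; rewrite -n' h mul0r.
  have Pb0 : conjq q P != 0 by rewrite cz.
  case: E' => E'.
    have [_ e'' _] := TF _ _ _ _ ha0 E'.
    exact: (@alg1 L) Pb0 e' e''.
  have [_ e'' _] := TF _ _ _ _ ha0 E'.
  move: e''; rewrite cN mulrN mulrN => /oppr_inj e''.
  exact: (@alg1 L) Pb0 e' e''.
move=> e.
have := @alg2 L _ _ _ _ _ _ _ _ _ ha0 t10 t20 e1 e2 n1 n2 e => /eqP; rewrite eqf_sqr => /orP [] /eqP h.
  by exists P1; split => //; left; rewrite -h.
by exists P1; split => //; right; rewrite -h.
Qed.
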